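(* Under the setting of the context, define $c^{(m)}(i,y)=\sum_{u\in\mathcal V}q(i,y,u)\bigl[(v-g)(i,y+u/m)-(v-g)(i,y)\bigr]$ for $i\in E$, $y\in[0,1]^d$, and $$Z_{n+1}=R_{n+1}+v(\xi_{n+1},R_{n+1}/m)-\bigl[R_n+v(\xi_n,R_n/m)+(h-g)(\xi_n,R_n/m)+c^{(m)}(\xi_n,R_n/m)\bigr].$$ Then $\mathbb E(Z_{n+1}\mid\mathcal F_n)=0$ for all $n\ge0$, i.e. $R_{n+1}+v(\xi_{n+1},R_{n+1}/m)=R_n+v(\xi_n,R_n/m)+(h-g)(\xi_n,R_n/m)+c^{(m)}(\xi_n,R_n/m)+Z_{n+1}$ with $Z_{n+1}$ a martingale increment. Moreover there is a constant $C$, depending only on $E$, $P$ and $p$, such that $|c^{(m)}(i,y)|\le C/m$ for all $m\ge1$, $i\in E$, $y\in[0,1]^d$.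
   Context: Let $d\ge1$, $(e_1,\dots,e_d)$ the canonical basis, $\mathcal V=\{\pm e_1,\dots,\pm e_d\}$. Let $E$ be a finite set and $P$ an irreducible and aperiodic stochastic matrix on $E$ with unique invariant probability $\mu$. For $k\in E$, $y\in\mathbb R^d$, $p(k,y,\cdot)$ is a probability on $\mathcal V$, with $y\mapsto p(k,y,u)$ twice continuously differentiable with bounded derivatives. Let $g(k,y)=\sum_uu\,p(k,y,u)$, assumed to satisfy $\sum_k\mu(k)g(k,y)=0$ for all $y$, and $v(i,y)=\sum_{n\ge0}\sum_jP^n(i,j)g(j,y)$. Reflected kernel: for $k\in E$, $y\in[0,1]^d$, $\ell\le d$: if $0<y_\ell<1$, $q(k,y,\pm e_\ell)=p(k,y,\pm e_\ell)$; if $y_\ell=1$, $q(k,y,e_\ell)=0$, $q(k,y,-e_\ell)=p(k,y,e_\ell)+p(k,y,-e_\ell)$; if $y_\ell=0$, $q(k,y,-e_\ell)=0$, $q(k,y,e_\ell)=p(k,y,e_\ell)+p(k,y,-e_\ell)$; $h(k,y)=\sum_uu\,q(k,y,u)$. For $m\ge1$, $(\xi_n,R_n)_{n\ge0}$ is a Markov chain on $E\times\{0,\dots,m\}^d$ with $R_0=0$ and, with $\mathcal F_n=\sigma(\xi_0,\dots,\xi_n,R_0,\dots,R_n)$, $\mathbb P(\xi_{n+1}=k,R_{n+1}=R_n+u\mid\mathcal F_n)=P(\xi_n,k)q(\xi_n,R_n/m,u)$. *)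

(* Defs.v *)
From HB Require Import structures.
From mathcomp Require Import all_boot all_order all_algebra.
From mathcomp Require Import all_classical all_reals all_analysis.

Set Implicit Arguments.
Unset Strict Implicit.
Unset Printing Implicit Defensive.

Import Order.TTheory GRing.Theory Num.Theory.
Import numFieldNormedType.Exports.
Local Open Scope classical_set_scope.
Local Open Scope ring_scope.

Section Defs.
Variable R : realType.

Section Chain.
Variable E : finType.
Variable P : E -> E -> R.

Fixpoint Ppow (n : nat) (i j : E) : R :=
  match n with
  | 0 => (i == j)%:R
  | n'.+1 => \sum_(k : E) P i k * Ppow n' k j
  end.

Definition stochastic : Prop :=
  (forall i j, 0 <= P i j) /\ (forall i, \sum_(j : E) P i j = 1).

Definition irreducible : Prop := forall i j, exists n, 0 < Ppow n i j.

Definition aperiodic : Prop :=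
  forall i (k : nat), (forall n, (0 < n)%N -> 0 < Ppow n i i -> (k %| n)%N) ->
    k = 1%N.

Definition invariant_probability (mu : E -> R) : Prop :=
  (forall i, 0 <= mu i) /\ \sum_(i : E) mu i = 1 /\
  (forall j, \sum_(i : E) mu i * P i j = mu j).
End Chain.

Section Directions.
Variable d : nat.

Definition dirV (u : 'I_d * bool) : 'rV[R]_d :=
  (if u.2 then 1 else -1) *: delta_mx 0 u.1.

Definition unit_cube (y : 'rV[R]_d) : Prop := forall l, 0 <= y 0 l <= 1.

Definition C2_bounded_derivs (f : 'rV[R]_d -> R) : Prop :=
  (forall x l, derivable f x (delta_mx 0 l)) /\
  (forall x l l', derivable ('D_(delta_mx 0 l) f) x (delta_mx 0 l')) /\
  (forall l l', continuous ('D_(delta_mx 0 l') ('D_(delta_mx 0 l) f))) /\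
  (exists M, forall x l, `|'D_(delta_mx 0 l) f x| <= M) /\
  (exists M, forall x l l', `|'D_(delta_mx 0 l') ('D_(delta_mx 0 l) f) x| <= M).

Variable E : finType.
Variable P : E -> E -> R.
Variable p : E -> 'rV[R]_d -> 'I_d * bool -> R.

Definition g (k : E) (y : 'rV[R]_d) : 'rV[R]_d :=
  \sum_(u : 'I_d * bool) p k y u *: dirV u.

Definition v (i : E) (y : 'rV[R]_d) : 'rV[R]_d :=
  limn (fun N => \sum_(0 <= n < N) \sum_(j : E) Ppow P n i j *: g j y).

Definition q (k : E) (y : 'rV[R]_d) (u : 'I_d * bool) : R :=
  let l := u.1 in
  let ptot := p k y (l, true) + p k y (l, false) in
  if y 0 l == 1 then (if u.2 then 0 else ptot)
  else if y 0 l == 0 then (if u.2 then ptot else 0)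
  else p k y u.

Definition h (k : E) (y : 'rV[R]_d) : 'rV[R]_d :=
  \sum_(u : 'I_d * bool) q k y u *: dirV u.

Definition cm (m : nat) (i : E) (y : 'rV[R]_d) : 'rV[R]_d :=
  \sum_(u : 'I_d * bool) q i y u *:
    ((v i (y + m%:R^-1 *: dirV u) - g i (y + m%:R^-1 *: dirV u))
     - (v i y - g i y)).

Variable m : nat.
Definition state := (E * {ffun 'I_d -> 'I_m.+1})%type.

Definition rvec (r : {ffun 'I_d -> 'I_m.+1}) : 'rV[R]_d := \row_l (r l)%:R.

Section Process.
Variable T : Type.
Variable X : nat -> T -> state.   (* X n = (xi_n, R_n) *)

Definition history (n : nat) (w : T) : seq state :=
  [seq X k w | k <- iota 0 n.+1].

(* F_n = sigma(xi_0,...,xi_n,R_0,...,R_n): since these variables take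
   finitely many values, its events are exactly the preimages of sets of
   histories *)
Definition Fn (n : nat) (A : set T) : Prop :=
  exists S : set (seq state), A = history n @^-1` S.

Definition Z (n : nat) (w : T) : 'rV[R]_d :=
  let i := (X n w).1 in
  let y := m%:R^-1 *: rvec (X n w).2 in
  rvec (X n.+1 w).2 + v (X n.+1 w).1 (m%:R^-1 *: rvec (X n.+1 w).2)
  - (rvec (X n w).2 + v i y + (h i y - g i y) + cm m i y).
End Process.
End Directions.
End Defs.

(* Main.v *)
Require Import Defs.
From HB Require Import structures.
From mathcomp Require Import all_boot all_order all_algebra.
From mathcomp Require Import all_classical all_reals all_analysis.
Import Order.TTheory GRing.Theory Num.Theory.
Import numFieldNormedType.Exports.
Local Open Scope classical_set_scope.
Local Open Scope ring_scope.
From mathcomp Require Import zify ring lra.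

Section Markov.
Variables (R : realType) (E : finType) (P : E -> E -> R).
Hypothesis Pge0 : forall i j, 0 <= P i j.
Hypothesis Psum : forall i, \sum_j P i j = 1.

Lemma Ppow_ge0 n i j : 0 <= Ppow P n i j.
Proof.
elim: n i j => [|n IH] i j /=; first by rewrite ler0n.
by apply: sumr_ge0 => k _; rewrite mulr_ge0.
Qed.

Lemma sum_delta (F : E -> R) i : \sum_k (i == k)%:R * F k = F i.
Proof.
rewrite (bigD1 i) //= eqxx mul1r big1 ?addr0 // => k /negbTE.
by rewrite eq_sym => ->; rewrite mul0r.
Qed.

Lemma Ppow_sum n i : \sum_j Ppow P n i j = 1.
Proof.
elim: n i => [|n IH] i /=.
  by rewrite (bigD1 i) //= eqxx big1 ?addr0 // => j /negbTE; rewrite eq_sym => ->.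
rewrite exchange_big /=; under eq_bigr do rewrite -mulr_sumr IH mulr1.
exact: Psum.
Qed.

Lemma Ppow_add a b i j :
  Ppow P (a + b) i j = \sum_k Ppow P a i k * Ppow P b k j.
Proof.
elim: a i => [|a IH] i.
  by rewrite add0n /= sum_delta.
rewrite addSn /=.
under eq_bigr do rewrite IH mulr_sumr.
rewrite exchange_big /=; apply: eq_bigr => l _.
by rewrite mulr_suml; apply: eq_bigr => k _; rewrite mulrA.
Qed.

Lemma Ppow1 i j : Ppow P 1 i j = P i j.
Proof.
rewrite /=; rewrite (bigD1 j) //= eqxx mulr1 big1 ?addr0 // => k /negbTE ->.
by rewrite mulr0.
Qed.

Definition app n (x : E -> R) i := \sum_j Ppow P n i j * x j.

Lemma app_add a b x i : app (a + b) x i = \sum_k Ppow P a i k * app b x k.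
Proof.
rewrite /app; under eq_bigr do rewrite Ppow_add mulr_suml.
rewrite exchange_big /=; apply: eq_bigr => k _.
by rewrite mulr_sumr; apply: eq_bigr => j _; rewrite mulrA.
Qed.

Lemma app0 x i : app 0 x i = x i.
Proof. exact: sum_delta. Qed.

Lemma appS n x i : app n.+1 x i = \sum_k P i k * app n x k.
Proof.
by rewrite -add1n app_add; apply: eq_bigr => k _; rewrite Ppow1.
Qed.

Lemma Ppow_mul_le a b i k j : Ppow P a i k * Ppow P b k j <= Ppow P (a + b) i j.
Proof.
rewrite Ppow_add (bigD1 k) //= lerDl; apply: sumr_ge0 => l _.
by rewrite mulr_ge0 ?Ppow_ge0.
Qed.

Lemma Ppow_pos_add a b i k j : 0 < Ppow P a i k -> 0 < Ppow P b k j ->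
  0 < Ppow P (a + b) i j.
Proof.
by move=> h1 h2; apply: lt_le_trans (Ppow_mul_le a b i k j); rewrite mulr_gt0.
Qed.

Definition band (a w : R) (x : E -> R) := forall j, a <= x j <= a + w.

Lemma step_band (Q : E -> E -> R) : (forall i j, 0 <= Q i j) ->
  (forall i, \sum_j Q i j = 1) -> forall a w x, band a w x ->
  band a w (fun i => \sum_j Q i j * x j).
Proof.
move=> Q0 Q1 a w x hx i.
have -> : \sum_j Q i j * x j = a + \sum_j Q i j * (x j - a).
  under [X in _ = _ + X]eq_bigr do rewrite mulrBr.
  by rewrite sumrB -mulr_suml Q1 mul1r addrC subrK.
rewrite lerDl lerD2l; apply/andP; split.
  by apply: sumr_ge0 => j _; rewrite mulr_ge0 // subr_ge0; case/andP: (hx j).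
rewrite -[w]mul1r -(Q1 i) mulr_suml; apply: ler_sum => j _.
by apply: ler_wpM2l => //; rewrite lerBlDl; case/andP: (hx j).
Qed.

Lemma contract_band (Q : E -> E -> R) (dl : R) : (forall i j, dl <= Q i j) ->
  (forall i, \sum_j Q i j = 1) -> forall a w x, 0 <= w -> band a w x ->
  exists a', band a' ((1 - #|E|%:R * dl) * w) (fun i => \sum_j Q i j * x j).
Proof.
move=> Qd Q1 a w x w0 hx.
exists (a + dl * \sum_j (x j - a)) => i.
have -> : \sum_j Q i j * x j =
    a + dl * \sum_j (x j - a) + \sum_j (Q i j - dl) * (x j - a).
  rewrite mulr_sumr -addrA -big_split /=.
  under [X in _ = _ + X]eq_bigr do rewrite mulrBl addrC subrK mulrBr.
  by rewrite sumrB -mulr_suml Q1 mul1r addrC subrK.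
rewrite lerDl lerD2l; apply/andP; split.
  apply: sumr_ge0 => j _; rewrite mulr_ge0 // subr_ge0 //.
  by case/andP: (hx j).
have -> : (1 - #|E|%:R * dl) = \sum_j (Q i j - dl).
  by rewrite sumrB Q1 sumr_const mulr_natl cardE.
rewrite mulr_suml; apply: ler_sum => j _.
by apply: ler_wpM2l; rewrite ?subr_ge0 // lerBlDl; case/andP: (hx j).
Qed.


Hypothesis Pirr : irreducible P.
Hypothesis Paper : aperiodic P.

Lemma Ppow0_pos i : 0 < Ppow P 0 i i.
Proof. by rewrite /= eqxx ltr01. Qed.

Lemma return_pos i : exists n, (0 < n)%N /\ 0 < Ppow P n i i.
Proof.
case: (pickP (fun j => j != i)) => [j ji | none].
  have [a ha] := Pirr i j; have [b hb] := Pirr j i.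
  exists (a + b); split; last exact: Ppow_pos_add ha hb.
  case: a ha => [|a] //=; rewrite eq_sym (negbTE ji) ltxx //.
exists 1%N; split => //; rewrite Ppow1.
have h1 : \sum_j P i j = P i i.
  by rewrite (bigD1 i) //= big1 ?addr0 // => j ji; move: (none j); rewrite /= ji.
by rewrite -h1 Psum ltr01.
Qed.

Lemma mult_pos i k x : 0 < Ppow P x i i -> 0 < Ppow P (k * x) i i.
Proof.
move=> hx; elim: k => [|k IH]; first by rewrite mul0n Ppow0_pos.
by rewrite mulSn; exact: Ppow_pos_add hx IH.
Qed.

Lemma consec i : exists x, 0 < Ppow P x i i /\ 0 < Ppow P x.+1 i i.
Proof.
have [n0 [n00 hn0]] := return_pos i.
suff H : forall d, (0 < d)%N -> forall x, 0 < Ppow P x i i ->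
    0 < Ppow P (x + d) i i -> exists x, 0 < Ppow P x i i /\ 0 < Ppow P x.+1 i i.
  by apply: (H n0 n00 0%N (Ppow0_pos i)); rewrite add0n.
elim/ltn_ind => d IH d0 x hx hxd.
case: (eqVneq d 1%N) => [d1|dn1].
  by exists x; split => //; rewrite -addn1 -d1.
have [n [n0' [hn nd]]] : exists n, (0 < n)%N /\ 0 < Ppow P n i i /\ ~~ (d %| n)%N.
  case: (pselect (exists n, (0 < n)%N /\ 0 < Ppow P n i i /\ ~~ (d %| n)%N)) => // H.
  exfalso; move/eqP: dn1; apply; apply: (Paper i) => n n1 pn.
  case: (boolP (d %| n)%N) => // nd; exfalso; apply: H; by exists n.
set q := (n %/ d)%N; set r := (n %% d)%N.
have hn' : n = (q * d + r)%N by rewrite /q /r -divn_eq.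
have r0 : (0 < r)%N by rewrite lt0n; apply: contra nd => /eqP h; rewrite /dvdn -/r h.
have rd : (r < d)%N by rewrite /r ltn_pmod.
apply: (IH (d - r)%N _ _ (n + q.+1 * x)%N).
- by rewrite ltn_subrL r0 d0.
- by rewrite subn_gt0.
- exact: Ppow_pos_add hn (@mult_pos i q.+1 x hx).
- have -> : (n + q.+1 * x + (d - r) = q.+1 * (x + d))%N.
    rewrite hn' mulnDr [(q.+1 * d)%N]mulSn.
    move: (q * d)%N (q.+1 * x)%N => A B; lia.
  exact: mult_pos.
Qed.

Lemma eventually_pos i : exists N, forall n, (N <= n)%N -> 0 < Ppow P n i i.
Proof.
have [x [hx hx1]] := consec i.
case: x hx hx1 => [|x] hx hx1.
  by exists 0%N => n _; rewrite -[n]muln1; exact: mult_pos.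
exists (x.+1 * x.+1)%N => n hn.
set q := (n %/ x.+1)%N; set r := (n %% x.+1)%N.
have hn' : n = (q * x.+1 + r)%N by rewrite /q /r -divn_eq.
have rx : (r < x.+1)%N by rewrite /r ltn_pmod.
have qx : (x.+1 <= q)%N by rewrite /q leq_divRL.
have -> : n = ((q - r) * x.+1 + r * x.+2)%N.
  rewrite {1}hn' mulnBl [(r * x.+2)%N]mulnS.
  have : (r * x.+1 <= q * x.+1)%N by rewrite leq_mul2r (leq_trans (ltnW rx) qx) orbT.
  move: (r * x.+1)%N (q * x.+1)%N => A B; lia.
exact: Ppow_pos_add (@mult_pos i _ _ hx) (@mult_pos i _ _ hx1).
Qed.

Lemma all_pos : exists N0, (0 < N0)%N /\ forall i j, 0 < Ppow P N0 i j.
Proof.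
have H : forall ij : E * E, exists B, forall n, (B <= n)%N -> 0 < Ppow P n ij.1 ij.2.
  move=> [i j] /=; have [N hN] := eventually_pos i; have [a ha] := Pirr i j.
  exists (N + a)%N => n hn.
  have -> : n = ((n - a) + a)%N by rewrite subnK // (leq_trans _ hn) // leq_addl.
  apply: Ppow_pos_add (hN _ _) ha; by rewrite leq_subRL ?(leq_trans _ hn) ?leq_addl // addnC.
have [f hf] := fin_all_exists H.
exists (\max_ij f ij).+1; split => // i j.
by apply: (hf (i, j)); apply: leqW; exact: leq_bigmax.
Qed.


Lemma band_P r a w x : band a w x -> band a w (app r x).
Proof.
move=> hx; elim: r => [|r IH] i; first by rewrite app0.
rewrite appS; exact: (@step_band P Pge0 Psum _ _ _ IH i).
Qed.

Lemma band_blocks N0 dl : (forall i j, dl <= Ppow P N0 i j) ->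
  forall a w x, 0 <= w -> 0 <= 1 - #|E|%:R * dl -> band a w x ->
  forall k r, exists a', band a' ((1 - #|E|%:R * dl) ^+ k * w) (app (k * N0 + r) x).
Proof.
move=> hd a w x w0 th0 hx; elim => [|k IH] r.
  by exists a; rewrite mul0n add0n expr0 mul1r; apply: band_P.
have [a' ha'] := IH r.
have [a'' ha''] := @contract_band (Ppow P N0) _ hd (Ppow_sum N0) _ _ _ (mulr_ge0 (exprn_ge0 k th0) w0) ha'.
exists a''; rewrite mulSn -addnA exprS -mulrA => i.
by rewrite app_add; exact: ha''.
Qed.

Variable mu : E -> R.
Hypothesis muinv : invariant_probability P mu.

Lemma mu_app n x : \sum_i mu i * app n x i = \sum_i mu i * x i.
Proof.
elim: n => [|n IH]; first by under eq_bigr do rewrite app0.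
under eq_bigr do rewrite appS mulr_sumr.
rewrite exchange_big /= -IH; apply: eq_bigr => k _.
under eq_bigr do rewrite mulrA.
by rewrite -mulr_suml (proj2 (proj2 muinv)).
Qed.

Lemma band_mu a w y : band a w y -> \sum_i mu i * y i = 0 ->
  forall i, `|y i| <= w.
Proof.
move=> hy hs i.
have [mu0 [mu1 _]] := muinv.
have h1 : a <= 0.
  have : \sum_i mu i * a <= \sum_i mu i * y i.
    by apply: ler_sum => j _; apply: ler_wpM2l => //; case/andP: (hy j).
  by rewrite hs -mulr_suml mu1 mul1r.
have h2 : 0 <= a + w.
  have : \sum_i mu i * y i <= \sum_i mu i * (a + w).
    by apply: ler_sum => j _; apply: ler_wpM2l => //; case/andP: (hy j).
  by rewrite hs -mulr_suml mu1 mul1r.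
have := hy i; case/andP => h3 h4.
rewrite ler_norml; apply/andP; split; lra.
Qed.

Lemma geom_sum (t : R) M : (1 - t) * \sum_(0 <= k < M) t ^+ k = 1 - t ^+ M.
Proof.
elim: M => [|M IH]; first by rewrite big_geq // mulr0 expr0 subrr.
rewrite big_nat_recr //= mulrDr IH exprS; ring.
Qed.

Lemma floor_sum (t : R) N0 K : (0 < N0)%N ->
  \sum_(0 <= n < K * N0) t ^+ (n %/ N0) = N0%:R * \sum_(0 <= k < K) t ^+ k.
Proof.
move=> N00; elim: K => [|K IH]; first by rewrite mul0n !big_geq // mulr0.
rewrite mulSn addnC (@big_cat_nat _ _ _ (K * N0)) ?leq_addr //= IH.
rewrite big_nat_recr //= mulrDr; congr (_ + _).
rewrite (eq_big_nat _ _ (F2 := fun=> t ^+ K)) ?sumr_const_nat.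
  by rewrite addKn mulr_natl.
move=> n /andP[h1 h2].
have -> : n = (K * N0 + (n - K * N0))%N by rewrite subnKC.
rewrite divnMDl // divn_small ?addn0 //.
by rewrite ltn_subLR // addnC.
Qed.

Lemma decay : exists (c : nat -> R) (K : R),
  (forall n, 0 <= c n) /\ (forall M, \sum_(0 <= n < M) c n <= K) /\
  forall x B, (forall j, `|x j| <= B) -> \sum_j mu j * x j = 0 ->
    forall n i, `|app n x i| <= c n * B.
Proof.
have [mu0 [mu1 _]] := muinv.
have [i0 _] : exists i0 : E, True.
  case: (pickP (@predT E)) => [i0 _|h]; first by exists i0.
  by move: mu1; rewrite big_pred0 // => /esym/eqP; rewrite oner_eq0.
have [N0 [N00 hpos]] := all_pos.
pose dl := \big[Order.min/1]_(ij : E * E) Ppow P N0 ij.1 ij.2.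
have hd : forall i j, dl <= Ppow P N0 i j.
  by move=> i j; exact: (bigmin_le _ (i, j) (fun ij => Ppow P N0 ij.1 ij.2)).
have dl0 : 0 < dl by apply: lt_bigmin => [|ij _]; [exact: ltr01| exact: hpos].
pose th := 1 - #|E|%:R * dl.
have th0 : 0 <= th.
  have : \sum_(j : E) dl <= \sum_j Ppow P N0 i0 j by apply: ler_sum => j _; exact: hd.
  rewrite Ppow_sum sumr_const -mulr_natl => h; rewrite /th subr_ge0.
  by apply: le_trans h.
have th1 : th < 1.
  rewrite /th ltrBlDr ltrDl mulr_gt0 // ltr0n.
  by apply/card_gt0P; exists i0.
exists (fun n => th ^+ (n %/ N0) * 2), (N0%:R / (1 - th) * 2).
split; first by move=> n; rewrite mulr_ge0 // exprn_ge0.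
split.
  move=> M; rewrite -mulr_suml ler_wpM2r //.
  apply: (@le_trans _ _ (\sum_(0 <= n < M * N0) th ^+ (n %/ N0))).
    rewrite [X in _ <= X](@big_cat_nat _ _ _ M) /=; [|by []|by rewrite -{1}[M]muln1 leq_mul2l N00 orbT].
    by rewrite lerDl; apply: sumr_ge0 => n _; rewrite exprn_ge0.
  rewrite floor_sum // ler_pdivlMr ?subr_gt0 // -mulrA [_ * (1 - th)]mulrC geom_sum.
  by rewrite -[leRHS]mulr1 ler_wpM2l ?ler0n // lerBlDr lerDl exprn_ge0.
move=> x B hB hmu n i.
have B0 : 0 <= B by apply: le_trans (hB i0).
have hx : band (- B) (B * 2) x.
  by move=> j; have := hB j; rewrite ler_norml => /andP[h1 h2]; apply/andP; split; lra.
have [a ha] := @band_blocks N0 dl hd _ _ _ (mulr_ge0 B0 (ler0n _ 2)) th0 hx (n %/ N0) (n %% N0).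
rewrite -divn_eq in ha.
rewrite -mulrA [2 * B]mulrC; apply: (@band_mu _ _ _ ha); by rewrite mu_app.
Qed.

End Markov.


Lemma rV_norm_le (R : realType) (d : nat) (M : 'rV[R]_d) b : 0 <= b ->
  (forall l, `|M 0 l| <= b) -> `|M| <= b.
Proof.
move=> b0 hb; rewrite [`|M|]/Num.norm /= mx_normrE.
apply: bigmax_le => // -[i l] _ /=; by rewrite ord1.
Qed.
Lemma rV_norm_ge (R : realType) (d : nat) (M : 'rV[R]_d) l : `|M 0 l| <= `|M|.
Proof.
rewrite [`|M|]/Num.norm /= mx_normrE.
exact: (le_bigmax _ (fun ij : 'I_1 * 'I_d => `|M ij.1 ij.2|) (0, l)).
Qed.
Lemma series_eq (R : realType) (d : nat) (u : nat -> 'rV[R]_d) N :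
  series u N = \sum_(0 <= n < N) u n.
Proof. by []. Qed.
Lemma v_series (R : realType) (d : nat) (E : finType) P p i y :
  v P p i y = limn (series (fun n => \sum_(j : E) Ppow P n i j *: g p j y) : nat -> 'rV[R]_d).
Proof. by []. Qed.

Lemma normed_cvg_rV (R : realType) (d : nat) (u_ : nat -> 'rV[R]_d) :
  cvgn [normed series u_] -> cvgn (series u_).
Proof.
move=> /cauchy_cvgP/cauchy_seriesP u_ncvg.
apply/cauchy_cvgP/cauchy_seriesP => e /u_ncvg.
apply: filterS => n /=; rewrite ger0_norm ?sumr_ge0//.
by apply: le_lt_trans; apply: ler_norm_sum.
Qed.

Lemma lim_series_norm_rV {R : realType} (d : nat) (f : nat -> 'rV[R]_d) :
    cvgn [normed series f] ->
  `|limn (series f)| <= limn [normed series f].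
Proof.
move=> cnf; have cf := @normed_cvg_rV _ _ _ cnf.
rewrite -lim_norm // (ler_lim (is_cvg_norm cf) cnf) //.
by near=> x; rewrite ler_norm_sum.
Unshelve. all: by end_near. Qed.

Lemma vseries (R : realType) (E : finType) (P : E -> E -> R) mu :
  (forall i j, 0 <= P i j) -> (forall i, \sum_j P i j = 1) ->
  irreducible P -> aperiodic P -> invariant_probability P mu ->
  exists K : R, 0 <= K /\ forall (d : nat) (G : E -> 'rV[R]_d) B, 0 <= B ->
  (forall j l, `|G j 0 l| <= B) -> (forall l, \sum_j mu j * G j 0 l = 0) ->
  forall i, cvgn (series (fun n => \sum_j Ppow P n i j *: G j)) /\
    `|limn (series (fun n => \sum_j Ppow P n i j *: G j))| <= K * B.
Proof.
move=> P0 P1 Pi Pa muinv.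
have [c [K [c0 [cK hc]]]] := @decay _ _ _ P0 P1 Pi Pa _ muinv.
have K0 : 0 <= K by have := cK 0%N; rewrite big_geq.
exists K; split => // d G B B0 hB hmu i.
set u := fun n => _.
have hu : forall n, `|u n| <= c n * B.
  move=> n; apply: rV_norm_le; first by rewrite mulr_ge0.
  move=> l; rewrite /u summxE.
  have -> : \sum_j (Ppow P n i j *: G j) 0 l = app _ _ P n (fun j => G j 0 l) i.
    by apply: eq_bigr => j _; rewrite mxE.
  by apply: hc => // j.
have hs : forall N, [normed series u] N <= K * B.
  move=> N; rewrite /series /=.
  apply: (@le_trans _ _ (\sum_(0 <= n < N) c n * B)); first exact: ler_sum.
  by rewrite -mulr_suml ler_wpM2r.
have cn : cvgn [normed series u].
  apply: nondecreasing_is_cvgn; first by apply: nondecreasing_series => n _ _; exact: normr_ge0.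
  by exists (K * B) => _ [n _ <-].
split; first exact: normed_cvg_rV.
apply: le_trans (@lim_series_norm_rV _ _ _ cn) _.
by apply: limr_le => //; near=> N; exact: hs.
Unshelve. all: by end_near. Qed.


Lemma dir_lip (R : realType) (d : nat) (f : 'rV[R]_d -> R) (e : 'rV[R]_d) M :
  (forall x, derivable f x e) -> (forall x, `|'D_e f x| <= M) ->
  forall y t, `|f (y + t *: e) - f y| <= M * `|t|.
Proof.
move=> df hM y t.
pose phi := fun s : R => f (y + s *: e).
have key s : (fun h : R => h^-1 *: ((phi \o shift s) (h *: 1) - phi s)) =
   (fun h : R => h^-1 *: ((f \o shift (y + s *: e)) (h *: e) - f (y + s *: e))).
  apply/funext => h /=; rewrite /phi /shift /=.
  congr (_ *: (f _ - _)).
  by rewrite [h *: 1]mulr1 scalerDl addrCA addrA.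
have dphi (s : R) : is_derive s 1 phi ('D_e f (y + s *: e)).
  have h1 : derivable phi s 1 by rewrite /derivable key; exact: df.
  by apply: DeriveDef => //; rewrite /derive key.
have cphi : forall a b : R, {within `[a, b], continuous phi}.
  move=> a b; apply: derivable_within_continuous => s _.
  exact: (@ex_derive _ _ _ _ _ _ _ (dphi s)).
have M0 : 0 <= M by apply: le_trans (hM y).
have phi0 : phi 0 = f y by rewrite /phi scale0r addr0.
case: (leP 0 t) => t0.
  have [c _ hc] := MVT_segment t0 (fun s _ => dphi s) (cphi 0 t).
  have -> : f (y + t *: e) - f y = phi t - phi 0 by rewrite phi0.
  rewrite hc subr0 normrM.
  by apply: ler_wpM2r => //; exact: hM.
have [c _ hc] := MVT_segment (ltW t0) (fun s _ => dphi s) (cphi t 0).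
have -> : f (y + t *: e) - f y = - (phi 0 - phi t) by rewrite phi0 opprB.
rewrite normrN hc sub0r normrM normrN.
by apply: ler_wpM2r => //; exact: hM.
Qed.


Lemma sub4 (V : zmodType) (a b c e : V) : a - b - (c - e) = (a - c) - (b - e).
Proof. by rewrite !opprB addrACA [RHS]addrACA; congr (_ + _); exact: addrC. Qed.

Lemma rV_subE (R : realType) (d : nat) (A B : 'rV[R]_d) l : (A - B) 0 l = A 0 l - B 0 l.
Proof. by rewrite !mxE. Qed.

Lemma dirV_le1 (R : realType) (d : nat) (u : 'I_d * bool) l : `|dirV R u 0 l| <= 1.
Proof.
rewrite /dirV !mxE normrM.
by case: (u.2); case: (_ && _); rewrite ?normrN ?normr1 ?normr0 ?mulr1 ?mulr0.
Qed.

Section Q.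
Variables (R : realType) (d : nat) (E : finType) (p : E -> 'rV[R]_d -> 'I_d * bool -> R).
Hypothesis p0 : forall k y u, 0 <= p k y u.

Lemma q_ge0 k y u : 0 <= q p k y u.
Proof.
rewrite /q /=; case: ifP => _; first by case: (u.2) => //; apply: addr_ge0.
by case: ifP => _; [case: (u.2) => //; apply: addr_ge0 | exact: p0].
Qed.

Lemma sum_pair (F : 'I_d * bool -> R) :
  \sum_u F u = \sum_l (F (l, true) + F (l, false)).
Proof.
transitivity (\sum_(u : 'I_d * bool) F (u.1, u.2)); first by apply: eq_bigr => -[].
rewrite -(pair_big predT predT (fun l b => F (l, b))) /=.
by apply: eq_bigr => l _; rewrite big_bool.
Qed.

Lemma q_sum k y : \sum_u q p k y u = \sum_u p k y u.
Proof.
rewrite !sum_pair; apply: eq_bigr => l _; rewrite /q /=.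
case: ifP => _; first by rewrite add0r.
by case: ifP => _; rewrite ?addr0.
Qed.

Lemma g_diff k z y l :
  (g p k z - g p k y) 0 l = \sum_u (p k z u - p k y u) * dirV R u 0 l.
Proof.
rewrite rV_subE /g !summxE -sumrB; apply: eq_bigr => u _.
by rewrite !mxE mulrBl.
Qed.

End Q.

Lemma partA (R : realType) (d : nat) (E : finType)
  (P : E -> E -> R) (mu : E -> R) (p : E -> 'rV[R]_d -> 'I_d * bool -> R) :
  stochastic P -> irreducible P -> aperiodic P ->
  invariant_probability P mu ->
  (forall k y u, 0 <= p k y u) ->
  (forall k y, \sum_(u : 'I_d * bool) p k y u = 1) ->
  (forall k u, C2_bounded_derivs (fun y => p k y u)) ->
  (forall y, \sum_(k : E) mu k *: g p k y = 0) ->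
  (exists C : R, forall m : nat, (0 < m)%N ->
     forall (i : E) (y : 'rV[R]_d), unit_cube y ->
       `|cm P p m i y| <= C / m%:R).
Proof.
move=> [P0 P1] Pi Pa muinv p0 p1 pC2 hmu.
have [K [K0 hK]] := @vseries _ _ _ _ P0 P1 Pi Pa muinv.
have hM : forall ku : E * ('I_d * bool), exists M : R,
    forall x l, `|'D_(delta_mx 0 l) (fun y => p ku.1 y ku.2) x| <= M.
  by move=> [k u]; have [_ [_ [_ [hM _]]]] := pC2 k u.
have [Mf hMf] := fin_all_exists hM.
pose L := \sum_ku `|Mf ku|.
have L0 : 0 <= L by apply: sumr_ge0.
have hL k u x l : `|'D_(delta_mx 0 l) (fun y => p k y u) x| <= L.
  apply: le_trans (hMf (k, u) x l) _.
  apply: le_trans (ler_norm _) _.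
  by rewrite /L (bigD1 (k, u)) //= lerDl sumr_ge0.
have plip k u y (m : nat) (u' : 'I_d * bool) : (0 < m)%N ->
    `|p k (y + m%:R^-1 *: dirV R u') u - p k y u| <= L / m%:R.
  move=> m0; rewrite /dirV scalerA.
  have [dk _] := pC2 k u.
  apply: le_trans (@dir_lip _ _ (fun y => p k y u) _ _ (dk^~ u'.1) (hL k u ^~ u'.1) y _) _.
  by case: (u'.2); rewrite ?mulrN1 ?mulr1 ?normrN ger0_norm ?invr_ge0 ?ler0n.
pose D := #|{: 'I_d * bool}|%:R * L.
have D0 : 0 <= D by rewrite mulr_ge0.
have glip k y m u' l : (0 < m)%N ->
    `|(g p k (y + m%:R^-1 *: dirV R u') - g p k y) 0 l| <= D / m%:R.
  move=> m0; rewrite g_diff.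
  apply: le_trans (ler_norm_sum _ _ _) _.
  apply: le_trans (@ler_sum _ _ _ _ _ (fun _ => L / m%:R) _) _.
    move=> u _; rewrite normrM.
    apply: le_trans (ler_wpM2l (normr_ge0 _) (@dirV_le1 _ _ _ _)) _.
    by rewrite mulr1; exact: plip.
  by rewrite sumr_const /D -[_ *+ _]mulr_natl mulrA.
have gb k y l : `|g p k y 0 l| <= 1.
  rewrite /g summxE -(p1 k y).
  apply: le_trans (ler_norm_sum _ _ _) _; apply: ler_sum => u _.
  rewrite mxE normrM ger0_norm //.
  by rewrite -[leRHS]mulr1 ler_wpM2l // (@dirV_le1 _ _ _ _).
have gmu y l : \sum_j mu j * g p j y 0 l = 0.
  have := congr1 (fun M : 'rV[R]_d => M 0 l) (hmu y); rewrite /= summxE mxE.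
  by move=> h; rewrite -[RHS]h; apply: eq_bigr => j _; rewrite mxE.
have vcv i y : cvgn (series (fun n => \sum_j Ppow P n i j *: g p j y)).
  exact: (proj1 (hK _ _ 1 ler01 (fun j l => gb j y l) (gmu y) i)).
have vlip i y m u' : (0 < m)%N ->
    `|v P p i (y + m%:R^-1 *: dirV R u') - v P p i y| <= K * (D / m%:R).
  move=> m0; set z := y + _.
  have -> : v P p i z - v P p i y =
      limn (series (fun n => \sum_j Ppow P n i j *: (g p j z - g p j y))).
    have -> : series (fun n => \sum_j Ppow P n i j *: (g p j z - g p j y)) =
        series (fun n => \sum_j Ppow P n i j *: g p j z) -
        series (fun n => \sum_j Ppow P n i j *: g p j y).
      have fsub : forall (f h : nat -> 'rV[R]_d) N, (f - h) N = f N - h N by [].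
      apply/funext => N; rewrite fsub /series /= -sumrB; apply: eq_bigr => n _.
      by rewrite -sumrB; apply: eq_bigr => j _; rewrite scalerBr.
    by rewrite limB.
  apply: (proj2 (hK _ (fun j => g p j z - g p j y) _ _ _ _ i)).
  - by rewrite divr_ge0.
  - by move=> j l; exact: glip.
  - move=> l; under eq_bigr do rewrite rV_subE mulrBr.
    by rewrite sumrB !gmu subrr.
exists ((K + 1) * D) => m m0 i y _.
rewrite /cm; apply: le_trans (ler_norm_sum _ _ _) _.
apply: le_trans (@ler_sum _ _ _ _ _
   (fun u => q p i y u * (K * (D / m%:R) + D / m%:R)) _) _.
  move=> u _; rewrite normrZ ger0_norm ?q_ge0 //.
  apply: ler_wpM2l; first exact: q_ge0.
  rewrite sub4; apply: le_trans (ler_normB _ _) _.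
  apply: lerD; first exact: vlip.
  apply: rV_norm_le; first by rewrite divr_ge0.
  by move=> l; exact: glip.
rewrite -mulr_suml q_sum // p1 mul1r.
by rewrite mulrDl mul1r !mulrA [X in _ <= X]mulrDl.
Qed.


Section FinInt.
Context (dT : measure_display) (T : measurableType dT) (R : realType)
  (Pr : probability T R).

Lemma preim_meas (S : finType) (Y : T -> S) :
  (forall s, measurable (Y @^-1` [set s])) -> forall Q, measurable (Y @^-1` Q).
Proof.
move=> hY Q.
have -> : Y @^-1` Q = \bigcup_(s in Q) Y @^-1` [set s].
  apply/seteqP; split => [w Qw|w [s Qs /= ->]] //=.
  by exists (Y w).
by apply: fin_bigcup_measurable; [exact: finite_finset | move=> s _; exact: hY].
Qed.

Definition pr (A : set T) : R := fine (Pr A).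

Lemma prE A : measurable A -> Pr A = (pr A)%:E.
Proof. by move=> mA; rewrite /pr fineK // fin_num_measure. Qed.

Lemma pr_ge0 A : 0 <= pr A.
Proof. by rewrite /pr fine_ge0 // measure_ge0. Qed.

Lemma int_fin (S : finType) (Y : T -> S) :
  (forall s, measurable (Y @^-1` [set s])) ->
  forall (A : set T), measurable A -> forall (phi : S -> R),
  (\int[Pr]_(w in A) (phi (Y w))%:E = (\sum_s phi s * pr (A `&` Y @^-1` [set s]))%:E)%E.
Proof.
move=> hY A mA phi.
transitivity (\int[Pr]_(w in A) (\sum_s (phi s)%:E * (\1_(Y @^-1` [set s]) w)%:E))%E.
  apply: eq_integral => w _.
  rewrite (bigD1 (Y w)) //= indicE mem_set // mule1 big1 ?adde0 // => s ns.
  by rewrite indicE memNset ?mule0 //= => e; move: ns; rewrite e eqxx.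
rewrite integral_sum //; last first.
  move=> s; apply: integrableZl => //; apply: (integrableS (E:=setT)) => //.
  exact: integrable_indic.
rewrite -sumEFin; apply: eq_bigr => s _.
rewrite integralZl //; last first.
  apply: (integrableS (E:=setT)) => //. exact: integrable_indic.
rewrite integral_indic // setIC EFinM /pr fineK //; apply: fin_num_measure; exact: measurableI.
Qed.

End FinInt.

Lemma finite_alg (R : realType) (S K : finType) (a : S -> R) (al : R)
  (ind : K -> S -> bool) (w : K -> R) (phi : S -> R) (c : K -> R) :
  (forall s, 0 <= a s) -> al = \sum_s a s ->
  (forall k, \sum_s (ind k s)%:R * a s = al * w k) -> \sum_k w k = 1 ->
  (forall s k k', ind k s -> ind k' s -> k = k') ->
  (forall k s, ind k s -> phi s = c k) -> \sum_k w k * c k = 0 ->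
  \sum_s phi s * a s = 0.
Proof.
move=> a0 hal hind w1 huniq hphi hwc.
have hG : forall s, \sum_k (ind k s)%:R = ([exists k, ind k s])%:R :> R.
  move=> s; case: existsP => [[k0 hk0]|hn].
    rewrite (bigD1 k0) //= hk0 big1 ?addr0 // => k nk.
    by case: (boolP (ind k s)) => // hk; move: nk; rewrite (huniq _ _ _ hk hk0) eqxx.
  by rewrite big1 // => k _; case: (boolP (ind k s)) => // hk; exfalso; apply: hn; exists k.
have e1 : \sum_s a s * ([exists k, ind k s])%:R = al.
  transitivity (\sum_k \sum_s (ind k s)%:R * a s).
    rewrite exchange_big /=; apply: eq_bigr => s _.
    by rewrite -hG mulr_sumr; apply: eq_bigr => k _; rewrite mulrC.
  under eq_bigr do rewrite hind.
  by rewrite -mulr_sumr w1 mulr1.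
have e2 : \sum_s a s * (1 - ([exists k, ind k s])%:R) = 0.
  under eq_bigr do rewrite mulrBr mulr1.
  by rewrite sumrB e1 hal subrr.
have e3 : forall s, ~~ [exists k, ind k s] -> a s = 0.
  move=> s hs.
  have hn : forall t, true -> 0 <= a t * (1 - ([exists k, ind k t])%:R).
    move=> t _; apply: mulr_ge0 => //; case: [exists k, ind k t] => /=.
      by rewrite subrr.
    by rewrite subr0.
  by have := psumr_eq0P hn e2; move=> /(_ s isT); rewrite (negbTE hs) subr0 mulr1.
transitivity (\sum_s \sum_k (ind k s)%:R * c k * a s).
  apply: eq_bigr => s _.
  case: (boolP [exists k, ind k s]) => [/existsP[k0 hk0]|hn].
    rewrite (bigD1 k0) //= hk0 mul1r (hphi _ _ hk0) big1 ?addr0 // => k nk.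
    case: (boolP (ind k s)) => hk; last by rewrite !mul0r.
    by move: nk; rewrite (huniq _ _ _ hk hk0) eqxx.
  by rewrite e3 // mulr0 big1 // => k _; rewrite mulr0.
rewrite exchange_big /=.
transitivity (\sum_k c k * (\sum_s (ind k s)%:R * a s)).
  apply: eq_bigr => k _; rewrite mulr_sumr.
  by under eq_bigr do rewrite mulrAC mulrC.
under eq_bigr do rewrite hind.
transitivity (al * \sum_k w k * c k); last by rewrite hwc mulr0.
rewrite mulr_sumr; apply: eq_bigr => k _.
by rewrite mulrCA [c k * _]mulrC.
Qed.

Lemma dirV_inj (R : realType) (d : nat) (u u' : 'I_d * bool) :
  dirV R u = dirV R u' -> u = u'.
Proof.
case: u => l b; case: u' => l' b' h.
have := congr1 (fun M : 'rV[R]_d => M 0 l) h; rewrite /dirV !mxE /= eqxx /=.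
case: (eqVneq l l') => [<-|ne].
  by rewrite !mulr1; clear h; case: b; case: b' => //= h1; exfalso; lra.
rewrite mulr0 mulr1 => h1; exfalso; clear h.
by move: h1; case: b => /=; lra.
Qed.

Lemma Pv (R : realType) (d : nat) (E : finType) (P : E -> E -> R)
  (p : E -> 'rV[R]_d -> 'I_d * bool -> R) z i :
  (forall k, cvgn (series (fun n => \sum_j Ppow P n k j *: g p j z))) ->
  \sum_k P i k *: v P p k z = v P p i z - g p i z.
Proof.
move=> hcv.
pose U := fun k => series (fun n => \sum_j Ppow P n k j *: g p j z).
have e : forall N, \sum_k P i k *: U k N = U i N.+1 - g p i z.
  move=> N; rewrite /U /series /= big_nat_recl //=.
  have -> : \sum_j Ppow P 0 i j *: g p j z = g p i z.
    rewrite (bigD1 i) //= eqxx scale1r big1 ?addr0 // => j /negbTE.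
    by rewrite eq_sym => ->; rewrite scale0r.
  rewrite addrC addKr.
  under eq_bigr do rewrite scaler_sumr.
  rewrite exchange_big /=; apply: eq_bigr => n _.
  under [RHS]eq_bigr do rewrite scaler_suml.
  rewrite exchange_big /=; apply: eq_bigr => k _.
  by rewrite scaler_sumr; apply: eq_bigr => j _; rewrite scalerA.
have h1 : (fun N => \sum_k P i k *: U k N) @ \oo --> \sum_k P i k *: v P p k z.
  apply: (@cvg_big _ _ +%R 0 predT add_continuous _ \oo (index_enum E) (fun k N => P i k *: U k N) (fun k => P i k *: v P p k z)) => // k _.
  by apply: cvgZ; [exact: cvg_cst | exact: (hcv k)].
have h1' : (fun N => U i N.+1 - g p i z) @ \oo --> \sum_k P i k *: v P p k z.
  by rewrite -(funext e).
have h2 : (fun N => U i N.+1 - g p i z) @ \oo --> v P p i z - g p i z.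
  apply: cvgB; last exact: cvg_cst.
  by rewrite (cvg_shiftS (U i)); exact: (hcv i).
rewrite -(cvg_lim _ h1') //.
by apply/cvg_lim => //.
Qed.

Lemma fin_id (R : realType) (d : nat) (hh S r vv gg : 'rV[R]_d) :
  hh + S + (r - (r + vv + (hh - gg) + (S - (vv - gg)))) = 0.
Proof. by apply/rowP => l; rewrite !mxE; ring. Qed.

Lemma drift (R : realType) (d : nat) (E : finType) (P : E -> E -> R)
  (p : E -> 'rV[R]_d -> 'I_d * bool -> R) i (m : nat) (r : 'rV[R]_d) :
  \sum_k P i k = 1 ->
  (forall z, \sum_k P i k *: v P p k z = v P p i z - g p i z) ->
  \sum_u q p i (m%:R^-1 *: r) u = 1 ->
  \sum_(ku : E * ('I_d * bool)) (P i ku.1 * q p i (m%:R^-1 *: r) ku.2) *: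
     (r + dirV R ku.2 + v P p ku.1 (m%:R^-1 *: (r + dirV R ku.2)) -
      (r + v P p i (m%:R^-1 *: r) + (h p i (m%:R^-1 *: r) - g p i (m%:R^-1 *: r))
       + cm P p m i (m%:R^-1 *: r))) = 0.
Proof.
move=> P1 hPv q1.
set y0 := m%:R^-1 *: r.
pose W := r + v P p i y0 + (h p i y0 - g p i y0) + cm P p m i y0.
rewrite -/W.
have reorg : forall a b : 'rV[R]_d, r + a + b - W = (a + b) + (r - W).
  by move=> a b; rewrite -!addrA addrCA; congr (_ + _); rewrite addrCA.
under eq_bigr do rewrite reorg scalerDr.
rewrite big_split /= -scaler_suml.
have F1 : \sum_(ku : E * ('I_d * bool)) P i ku.1 * q p i y0 ku.2 = 1.
  rewrite -(pair_big predT predT (fun k u => P i k * q p i y0 u)) /=.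
  under eq_bigr do rewrite -mulr_sumr q1 mulr1.
  exact: P1.
rewrite F1 scale1r.
under eq_bigr do rewrite scalerDr.
rewrite big_split /=.
have F2 : \sum_(ku : E * ('I_d * bool)) (P i ku.1 * q p i y0 ku.2) *: dirV R ku.2
    = h p i y0.
  rewrite -(pair_big predT predT (fun k u => (P i k * q p i y0 u) *: dirV R u)) /=.
  transitivity (\sum_k P i k *: h p i y0).
    apply: eq_bigr => k _; rewrite /h scaler_sumr; apply: eq_bigr => u _.
    by rewrite scalerA.
  by rewrite -scaler_suml P1 scale1r.
have F3 : \sum_(ku : E * ('I_d * bool)) (P i ku.1 * q p i y0 ku.2) *:
     v P p ku.1 (m%:R^-1 *: (r + dirV R ku.2)) =
   \sum_u q p i y0 u *: (v P p i (y0 + m%:R^-1 *: dirV R u)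
                         - g p i (y0 + m%:R^-1 *: dirV R u)).
  rewrite -(pair_big predT predT
    (fun k u => (P i k * q p i y0 u) *: v P p k (m%:R^-1 *: (r + dirV R u)))) /=.
  rewrite exchange_big /=; apply: eq_bigr => u _.
  rewrite -hPv scaler_sumr; apply: eq_bigr => k _.
  by rewrite scalerA [q _ _ _ _ * _]mulrC scalerDr.
have F4 : cm P p m i y0 = \sum_u q p i y0 u *: (v P p i (y0 + m%:R^-1 *: dirV R u)
     - g p i (y0 + m%:R^-1 *: dirV R u)) - (v P p i y0 - g p i y0).
  rewrite /cm; under eq_bigr do rewrite scalerBr.
  by rewrite sumrB -scaler_suml q1 scale1r.
by rewrite F2 F3 /W F4 fin_id.
Qed.


Arguments pr {dT T R} Pr A.
Arguments int_fin {dT T R} Pr {S} Y.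
Arguments preim_meas {dT T S} Y.

Lemma pr_preim (dT : measure_display) (T : measurableType dT) (R : realType)
  (Pr : probability T R) (S : finType) (Y : T -> S) :
  (forall s, measurable (Y @^-1` [set s])) ->
  forall A, measurable A -> forall (Q : set S),
  pr Pr (A `&` Y @^-1` Q) = \sum_s (s \in Q)%:R * pr Pr (A `&` Y @^-1` [set s]).
Proof.
move=> hY A mA Q.
have := int_fin Pr Y hY A mA (fun s => (s \in Q)%:R).
have -> : (\int[Pr]_(w in A) ((Y w \in Q)%:R)%:E =
           \int[Pr]_(w in A) (\1_(Y @^-1` Q) w)%:E)%E.
  by apply: eq_integral => w _; rewrite indicE; congr (_%:R%:E).
rewrite integral_indic //; last exact: preim_meas.
by rewrite setIC => /(congr1 fine) /= <-.
Qed.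

Section Proc.
Variables (R : realType) (d : nat) (E : finType) (m : nat).
Variables (dT : measure_display) (T : measurableType dT).
Variable X : nat -> T -> state d E m.
Hypothesis hmeas : forall n (s : state d E m), measurable [set w | X n w = s].

Lemma nth_hist n w s : nth s (history X n w) n = X n w.
Proof. by rewrite /history (nth_map 0%N) ?size_iota // nth_iota // add0n. Qed.

Lemma Fn_restrict n A s : Fn X n A -> Fn X n (A `&` [set w | X n w = s]).
Proof.
case=> S0 ->; exists [set hh | S0 hh /\ nth s hh n = s].
apply/seteqP; split => w /= [h1 h2]; split => //; first by rewrite nth_hist.
by rewrite -(nth_hist n w s).
Qed.

Lemma Fn_meas n A : Fn X n A -> measurable A.
Proof.
case=> S0 ->.
pose Yh := fun w => [ffun k : 'I_n.+1 => X k w].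
have hist : forall w, history X n w = [seq Yh w (inord k) | k <- iota 0 n.+1].
  move=> w; rewrite /history; apply/eq_in_map => k.
  rewrite mem_iota add0n => /andP[_ hk] /=.
  by rewrite ffunE inordK.
have -> : history X n @^-1` S0 =
    Yh @^-1` [set f | S0 [seq f (inord k) | k <- iota 0 n.+1]].
  by apply/seteqP; split => w /=; rewrite hist.
apply: preim_meas => f.
have -> : Yh @^-1` [set f] = ~` \bigcup_(k in [set: 'I_n.+1]) ~` [set w | X k w = f k].
  apply/seteqP; split => w /=.
    by move=> <- [k _ /=]; apply; rewrite ffunE.
  move=> H; apply/ffunP => k; rewrite ffunE; apply: contrapT => nk.
  by apply: H; exists k.
apply: measurableC; apply: fin_bigcup_measurable; first exact: finite_finset.
by move=> k _; apply: measurableC.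
Qed.

End Proc.

Arguments Fn_meas {d E m dT T X} hmeas {n A}.
Arguments Fn_restrict {d E m dT T X n A} s.



Lemma partB (R : realType) (d : nat) (E : finType)
  (P : E -> E -> R) (mu : E -> R) (p : E -> 'rV[R]_d -> 'I_d * bool -> R) :
  stochastic P -> irreducible P -> aperiodic P ->
  invariant_probability P mu ->
  (forall k y u, 0 <= p k y u) ->
  (forall k y, \sum_(u : 'I_d * bool) p k y u = 1) ->
  (forall y, \sum_(k : E) mu k *: g p k y = 0) ->
  (forall m : nat, (0 < m)%N ->
   forall (dT : measure_display) (T : measurableType dT)
          (Pr : probability T R) (X : nat -> T -> state d E m),
     (forall n (s : state d E m), measurable [set w | X n w = s]) ->
     (forall n A, Fn X n A -> forall (k : E) (u : 'I_d * bool),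
        Pr (A `&` [set w | (X n.+1 w).1 = k /\
                           rvec R (X n.+1 w).2 = rvec R (X n w).2 + dirV R u]) =
        (\int[Pr]_(w in A)
           (P (X n w).1 k * q p (X n w).1 (m%:R^-1 *: rvec R (X n w).2) u)%:E)%E) ->
     forall n A, Fn X n A -> forall l : 'I_d,
       (\int[Pr]_(w in A) ((Z P p X n w) 0 l)%:E = 0)%E).
Proof.
move=> [P0 P1] Pi Pa muinv p0 p1 hmu m m0 dT T Pr X hmeas htr n A hA l.
have [K [K0 hK]] := @vseries _ _ _ _ P0 P1 Pi Pa muinv.
have gb k y l' : `|g p k y 0 l'| <= 1.
  rewrite /g summxE -(p1 k y).
  apply: le_trans (ler_norm_sum _ _ _) _; apply: ler_sum => u _.
  rewrite mxE normrM ger0_norm //.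
  by rewrite -[leRHS]mulr1 ler_wpM2l // (@dirV_le1 _ _ _ _).
have gmu y l' : \sum_j mu j * g p j y 0 l' = 0.
  have := congr1 (fun M : 'rV[R]_d => M 0 l') (hmu y); rewrite /= summxE mxE.
  by move=> h; rewrite -[RHS]h; apply: eq_bigr => j _; rewrite mxE.
have vcv z k : cvgn (series (fun n => \sum_j Ppow P n k j *: g p j z)).
  exact: (proj1 (hK _ _ 1 ler01 (fun j l' => gb j z l') (gmu z) k)).
have hPv i z : \sum_k P i k *: v P p k z = v P p i z - g p i z.
  exact: Pv (vcv z).
have mA := Fn_meas hmeas hA.
pose key := fun w => (X n w, X n.+1 w).
have hkey : forall t, measurable (key @^-1` [set t]).
  move=> [s0 s1].
  have -> : key @^-1` [set (s0, s1)] =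
      [set w | X n w = s0] `&` [set w | X n.+1 w = s1].
    apply/seteqP; split => w; rewrite /key /=.
      by case=> -> ->.
    by case=> -> ->.
  exact: measurableI.
pose phi := fun t : state d E m * state d E m =>
  (rvec R t.2.2 + v P p t.2.1 (m%:R^-1 *: rvec R t.2.2) -
   (rvec R t.1.2 + v P p t.1.1 (m%:R^-1 *: rvec R t.1.2) +
    (h p t.1.1 (m%:R^-1 *: rvec R t.1.2) - g p t.1.1 (m%:R^-1 *: rvec R t.1.2)) +
    cm P p m t.1.1 (m%:R^-1 *: rvec R t.1.2))) 0 l.
have -> : (\int[Pr]_(w in A) ((Z P p X n w) 0 l)%:E =
           \int[Pr]_(w in A) (phi (key w))%:E)%E by [].
rewrite (int_fin Pr key hkey A mA phi).
suff -> : \sum_t phi t * pr Pr (A `&` key @^-1` [set t]) = 0 by [].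
transitivity (\sum_s0 \sum_s1 phi (s0, s1) * pr Pr (A `&` key @^-1` [set (s0, s1)])).
  rewrite (pair_big predT predT (fun s0 s1 => phi (s0, s1) * pr Pr (A `&` key @^-1` [set (s0, s1)]))) /=.
  by apply: eq_bigr => -[s0 s1].
apply: big1 => s0 _.
pose As := A `&` [set w | X n w = s0].
have hAs : Fn X n As := Fn_restrict s0 hA.
have mAs : measurable As := Fn_meas hmeas hAs.
have hX1 : forall s, measurable ((X n.+1) @^-1` [set s]) := hmeas n.+1.
have eA : forall s1, A `&` key @^-1` [set (s0, s1)] = As `&` X n.+1 @^-1` [set s1].
  move=> s1; apply/seteqP; split => w'; rewrite /key /=.
    by move=> [hw [e1 e2]]; split; [split|].
  by move=> [[hw e1] e2]; split => //; rewrite e1 e2.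
pose a := fun s1 => pr Pr (A `&` key @^-1` [set (s0, s1)]).
pose ind := fun (ku : E * ('I_d * bool)) (s1 : state d E m) =>
  (s1.1 == ku.1) && (rvec R s1.2 == rvec R s0.2 + dirV R ku.2).
pose y0 := m%:R^-1 *: rvec R s0.2.
pose wt := fun ku : E * ('I_d * bool) => P s0.1 ku.1 * q p s0.1 y0 ku.2.
pose c := fun ku : E * ('I_d * bool) =>
  (rvec R s0.2 + dirV R ku.2 + v P p ku.1 (m%:R^-1 *: (rvec R s0.2 + dirV R ku.2)) -
   (rvec R s0.2 + v P p s0.1 y0 + (h p s0.1 y0 - g p s0.1 y0) + cm P p m s0.1 y0)) 0 l.
refine (@finite_alg R (state d E m) (E * ('I_d * bool))%type a (pr Pr As) ind wt
          (fun s1 => phi (s0, s1)) c _ _ _ _ _ _ _).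
- by move=> s1; apply: pr_ge0.
- have := pr_preim _ _ _ Pr _ (X n.+1) hX1 As mAs setT.
  rewrite preimage_setT setIT => ->; apply: eq_bigr => s1 _.
  by rewrite in_setT mul1r /a eA.
- move=> [k u].
  have e1 := htr n As hAs k u.
  have eB : As `&` [set w | (X n.+1 w).1 = k /\ rvec R (X n.+1 w).2 = rvec R (X n w).2 + dirV R u] =
            As `&` X n.+1 @^-1` [set s1 | ind (k, u) s1].
    apply/seteqP; split => w' /=.
      move=> [[hw e0] [f1 f2]]; split => //; apply/andP; split; apply/eqP => //.
      by rewrite f2 e0.
    move=> [[hw e0] /andP[/eqP f1 /eqP f2]]; split => //; split => //.
    by rewrite f2 e0.
  have e2 : (\int[Pr]_(w' in As)
      (P (X n w').1 k * q p (X n w').1 (m%:R^-1 *: rvec R (X n w').2) u)%:E =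
      ((P s0.1 k * q p s0.1 y0 u) * pr Pr As)%:E)%E.
    transitivity (\int[Pr]_(w' in As) (cst (P s0.1 k * q p s0.1 y0 u)%:E) w')%E.
      by apply: eq_integral => w' /set_mem [_ /= ->].
    rewrite integral_cst // [RHS]EFinM; congr (_ * _)%E.
    by rewrite /pr fineK //; exact: fin_num_measure.
  rewrite eB e2 in e1.
  have e3 := pr_preim _ _ _ Pr _ (X n.+1) hX1 As mAs [set s1 | ind (k, u) s1].
  transitivity (pr Pr (As `&` X n.+1 @^-1` [set s1 | ind (k, u) s1])).
    rewrite e3; apply: eq_bigr => s1 _; rewrite /a eA.
    have -> : (s1 \in [set s | ind (k, u) s]) = ind (k, u) s1.
      by apply/idP/idP => h'; [exact: set_mem h' | exact: mem_set h'].
    by [].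
  rewrite /pr; move/(congr1 fine): e1 => /= ->.
  by rewrite mulrC.
- rewrite -(pair_big predT predT (fun k u => P s0.1 k * q p s0.1 y0 u)) /=.
  under eq_bigr do rewrite -mulr_sumr q_sum p1 mulr1.
  exact: P1.
- move=> s1 [k u] [k' u'] /andP[/eqP /= h1 /eqP /= h2] /andP[/eqP /= h3 /eqP /= h4].
  have hu : dirV R u = dirV R u' by apply: (addrI (rvec R s0.2)); rewrite -h2 -h4.
  by rewrite -h1 -h3 (@dirV_inj _ _ _ _ hu).
- move=> [k u] s1 /andP[/eqP /= h1 /eqP /= h2].
  by rewrite /phi /c /= h2 h1.
- have hq : \sum_u q p s0.1 (m%:R^-1 *: rvec R s0.2) u = 1 by rewrite q_sum p1.
  have := congr1 (fun M : 'rV[R]_d => M 0 l)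
    (@drift _ _ _ P p s0.1 m (rvec R s0.2) (P1 s0.1) (hPv s0.1) hq).
  rewrite /= summxE mxE => h0; rewrite -[RHS]h0; apply: eq_bigr => ku _.
  by rewrite mxE.
Qed.


Theorem proposition5p1 (R : realType) (d : nat) (E : finType)
  (P : E -> E -> R) (mu : E -> R) (p : E -> 'rV[R]_d -> 'I_d * bool -> R) :
  (0 < d)%N ->
  stochastic P -> irreducible P -> aperiodic P ->
  invariant_probability P mu ->
  (forall k y u, 0 <= p k y u) ->
  (forall k y, \sum_(u : 'I_d * bool) p k y u = 1) ->
  (forall k u, C2_bounded_derivs (fun y => p k y u)) ->
  (forall y, \sum_(k : E) mu k *: g p k y = 0) ->
  (* the bound on c^(m), with C depending only on E, P and p *)
  (exists C : R, forall m : nat, (0 < m)%N ->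
     forall (i : E) (y : 'rV[R]_d), unit_cube y ->
       `|cm P p m i y| <= C / m%:R) /\
  (* the martingale-increment property of Z_{n+1} *)
  (forall m : nat, (0 < m)%N ->
   forall (dT : measure_display) (T : measurableType dT)
          (Pr : probability T R) (X : nat -> T -> state d E m),
     (forall n (s : state d E m), measurable [set w | X n w = s]) ->
     (forall w, (X 0%N w).2 = [ffun => ord0]) ->
     (forall n A, Fn X n A -> forall (k : E) (u : 'I_d * bool),
        Pr (A `&` [set w | (X n.+1 w).1 = k /\
                           rvec R (X n.+1 w).2 = rvec R (X n w).2 + dirV R u]) =
        (\int[Pr]_(w in A)
           (P (X n w).1 k * q p (X n w).1 (m%:R^-1 *: rvec R (X n w).2) u)%:E)%E) ->
     forall n A, Fn X n A -> forall l : 'I_d,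
       (\int[Pr]_(w in A) ((Z P p X n w) 0 l)%:E = 0)%E).
Proof.
move=> _ st Pi Pa muinv p0 p1 pC2 hmu; split.
  exact: (@partA _ _ _ _ _ _ st Pi Pa muinv p0 p1 pC2 hmu).
move=> m m0 dT T Pr X hmeas _ htr.
exact: (@partB _ _ _ _ _ _ st Pi Pa muinv p0 p1 hmu m m0 dT T Pr X hmeas htr).
Qed.
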